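(* Let $\epsilon>0$. Consider mechanisms $Q:\mathbb{R}\to\Delta(\mathbb{R})$ of the form $Qu=u+V$, where the noise $V$ is a real random variable with probability distribution $g\in\Delta(\mathbb{R})$ that does not depend on the input $u$, and suppose $Q$ is $\epsilon$-Lipschitz private with respect to the metric $|u-u'|$ on $\mathbb{R}$. Then $$\mathbb{E}\big(Qu-u\big)^2=\mathbb{E}_{V\sim g}V^2\;\ge\;\mathbb{E}_{V\sim l}V^2=\frac{2}{\epsilon^2},$$ where $l(v)=\frac{\epsilon}{2}e^{-\epsilon|v|}$ is the Laplace density; i.e. the Laplace mechanism (adding noise with density $l$), which is itself $\epsilon$-Lipschitz private, achieves the minimal mean-squared error for approximating the identity query $q(u)=u$ among all such mechanisms.
   Context: $\Delta(\mathcal{Y})$ denotes the set of probability measures on $\mathcal{Y}$ (with its Borel $\sigma$-algebra). For a normed/metric space $(\mathcal{U},\|\cdot\|)$ and a response set $\mathcal{Y}$, a mechanism $Q:\mathcal{U}\to\Delta(\mathcal{Y})$ is called $\epsilon$-Lipschitz (differentially) private if for all $u,u'\in\mathcal{U}$ and all measurable $\mathcal{S}\subseteq\mathcal{Y}$, $|\ln\mathbb{P}(Qu\in\mathcal{S})-\ln\mathbb{P}(Qu'\in\mathcal{S})|\le\epsilon\|u-u'\|$, equivalently $\mathbb{P}(Qu\in\mathcal{S})\le e^{\epsilon\|u-u'\|}\mathbb{P}(Qu'\in\mathcal{S})$ for all such $u,u',\mathcal{S}$. *)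

(* Defs.v *)
From HB Require Import structures.
From mathcomp Require Import all_boot all_order all_algebra.
From mathcomp Require Import all_classical all_reals all_analysis.
Set Implicit Arguments. Unset Strict Implicit. Unset Printing Implicit Defensive.
Import Order.TTheory GRing.Theory Num.Theory.
Local Open Scope classical_set_scope.
Local Open Scope ring_scope.

(* Additive-noise mechanism Q u = u + V with V ~ g (g a set function on the
   Borel sets of R, typically a probability measure):
   P(Q u \in S) = g [set v | u + v \in S].
   eps-Lipschitz privacy w.r.t. |u - u'| in multiplicative form:
   P(Q u \in S) <= exp(eps |u-u'|) P(Q u' \in S) for all u, u', measurable S. *)
Definition additive_noise_lipschitz_private {R : realType} (eps : R)
  (g : set R -> \bar R) : Prop :=
  forall (u u' : R) (S : set R), measurable S ->
    (g [set v | S (u + v)%R] <= (expR (eps * `|u - u'|)%R)%:E * g [set v | S (u' + v)%R])%E.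

Definition laplace_pdf {R : realType} (eps : R) (v : R) : R :=
  eps / 2 * expR (- (eps * `|v|)).

Definition laplace_prob {R : realType} (eps : R) : set R -> \bar R :=
  fun A => (\int[lebesgue_measure]_(x in A) (laplace_pdf eps x)%:E)%E.

(* Main.v *)
Require Import Defs.
From HB Require Import structures.
From mathcomp Require Import all_boot all_order all_algebra.
From mathcomp Require Import all_classical all_reals all_analysis.
Import Order.TTheory GRing.Theory Num.Theory.
Local Open Scope classical_set_scope.
Local Open Scope ring_scope.
From mathcomp Require Import measurable_realfun lebesgue_integral ftc.
From mathcomp Require Import lra ring.
Import numFieldNormedType.Exports.

Section S.
Context {R : realType}.
Notation mu := (@lebesgue_measure R).
Variable c : R.
Let phi := fun x : R => x + c.
Let mphi : measurable_fun setT phi.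
Proof. apply: continuous_measurable_fun => x; apply: cvgD; [exact: cvg_id | exact: cvg_cst]. Qed.
Let nu : {measure set (measurableTypeR R) -> \bar R}.
Proof. refine (@pushforward _ _ (measurableTypeR R) (measurableTypeR R) R mu phi : {measure set (measurableTypeR R) -> \bar R}); exact: mphi. Defined.
Lemma nuE A : measurable A -> mu A = pushforward mu phi A.
Proof.
move=> mA; have := @lebesgue_measure_unique R nu; apply => // X /ocitvP [->|[[a b]/= ab ->]].
  by rewrite measure0 measure0.
rewrite /nu /= /pushforward.
idtac.
have -> : phi @^-1` `]a, b] = `]a - c, b - c]%classic.
  apply/seteqP; split=> x; rewrite /phi /= !in_itv /=.
    by rewrite ltrBlDr lerBrDr.
  by rewrite ltrBlDr lerBrDr.
rewrite !lebesgue_measure_itv /= !lte_fin ltrD2r ab.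
rewrite -!EFinB; congr EFin; lra.
Qed.
Lemma integral_shift (D : set R) (h : R -> R) : measurable D ->
  measurable_fun setT h -> (forall x, 0 <= h x) ->
  (\int[mu]_(x in D) (h x)%:E = \int[mu]_(x in [set x | D (x + c)%R]) (h (x + c)%R)%:E)%E.
Proof.
move=> mD mh h0.
rewrite (@eq_measure_integral _ (measurableTypeR R) R D nu); last first.
  by move=> A mA _; exact: nuE.
rewrite (@ge0_integral_pushforward _ _ (measurableTypeR R) (measurableTypeR R) R phi mphi mu D) //.
  by apply/measurable_EFinP; apply: measurable_funTS.
by move=> y _; rewrite lee_fin.
Qed.
End S.

Section P2.
Context {R : realType}.
Notation mu := (@lebesgue_measure R).

Lemma continuous_laplace (eps : R) : continuous (fun x : R => laplace_pdf eps x).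
Proof.
move=> x; rewrite /laplace_pdf.
apply: cvgM; first exact: cvg_cst.
apply: continuous_comp; last exact: continuous_expR.
apply: cvgN; apply: cvgM; first exact: cvg_cst.
exact: cvg_norm.
Qed.

Lemma laplace_ge0 (eps : R) x : 0 < eps -> 0 <= laplace_pdf eps x.
Proof. by move=> e0; rewrite /laplace_pdf mulr_ge0 ?divr_ge0 ?expR_ge0 ?ltW. Qed.

Lemma laplace_shiftE (eps u : R) (S : set R) : 0 < eps -> measurable S ->
  laplace_prob eps [set v | S (u + v)] =
  (\int[mu]_(y in S) (laplace_pdf eps (y - u))%:E)%E.
Proof.
move=> e0 mS.
rewrite (integral_shift u) //.
- rewrite /laplace_prob; congr (integral _ _ _).
    by apply/seteqP; split=> x /=; rewrite addrC.
  by apply/funext => x; rewrite addrK.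
- apply: continuous_measurable_fun => x.
  apply: (@continuous_comp _ _ _ (fun y : R => y - u) (fun y => laplace_pdf eps y)); last exact: continuous_laplace.
  by apply: cvgB; [exact: cvg_id | exact: cvg_cst].
- by move=> x; exact: laplace_ge0.
Qed.

Lemma laplace_private (eps : R) : 0 < eps -> additive_noise_lipschitz_private eps (laplace_prob eps).
Proof.
move=> e0 u u' S mS.
rewrite !laplace_shiftE //.
have mh (w : R) : measurable_fun setT (fun y : R => laplace_pdf eps (y - w)).
  apply: continuous_measurable_fun => x.
  apply: (@continuous_comp _ _ _ (fun y : R => y - w) (fun y => laplace_pdf eps y)); last exact: continuous_laplace.
  by apply: cvgB; [exact: cvg_id | exact: cvg_cst].
have mEh (w : R) : measurable_fun setT (fun y : R => (laplace_pdf eps (y - w))%:E).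
  exact/measurable_EFinP.
rewrite -ge0_integralZl_EFin //; last first.
- exact: (measurable_funTS (mEh u')).
- by move=> x _; rewrite lee_fin laplace_ge0.
apply: ge0_le_integral => //.
- by move=> x _; rewrite lee_fin laplace_ge0.
- exact: (measurable_funTS (mEh u)).
- exact: (measurable_funTS (measurable_funeM _ (mEh u'))).
move=> y _; rewrite -EFinM lee_fin /laplace_pdf mulrCA ler_pM2l ?divr_gt0 //.
rewrite -expRD ler_expR.
have h : eps * `|y - u'| <= eps * `|y - u| + eps * `|u - u'|.
  by rewrite -mulrDr ler_pM2l // ler_distD.
lra.
Qed.
End P2.

Section Calc.
Context {R : realType}.
Notation mu := (@lebesgue_measure R).
Variable eps : R.
Hypothesis heps : 0 < eps.

Lemma cvg_polyexp (k : nat) :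
  (fun x : R => x ^+ k * expR (- (eps * x))) @ +oo --> (0 : R).
Proof.
apply/cvgrPdist_le => e e0; near=> x.
have x1 : 1 <= x by near: x; apply: nbhs_pinfty_ge; exact: num_real.
pose C := (k.+1)`!%:R / (e * eps ^+ k.+1).
have xC : C <= x by near: x; apply: nbhs_pinfty_ge; exact: num_real.
have x0 : 0 < x by exact: (lt_le_trans ltr01 x1).
rewrite sub0r normrN ger0_norm; last by rewrite mulr_ge0 ?expR_ge0 // exprn_ge0 // ltW.
have hE := @expR_ge1Dxn R (eps * x) k (mulr_ge0 (ltW heps) (ltW x0)).
have fpos : 0 < (k.+1)`!%:R :> R by rewrite ltr0n fact_gt0.
rewrite expRN ler_pdivrMr ?expR_gt0 //.
apply: (le_trans _ (ler_wpM2l (ltW e0) hE)).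
have : 1 <= x * (e * eps ^+ k.+1 / (k.+1)`!%:R).
  rewrite -ler_pdivrMr; last by rewrite divr_gt0 // mulr_gt0 // exprn_gt0.
  by rewrite div1r invf_div.
move=> h1.
rewrite mulrDr mulr1 -[X in X <= _]add0r lerD //; first by rewrite ltW.
have -> : e * ((eps * x) ^+ k.+1 / (k.+1)`!%:R) = x ^+ k * (x * (e * eps ^+ k.+1 / (k.+1)`!%:R)).
  by rewrite exprMn [x ^+ k.+1]exprS; ring.
by rewrite -[X in X <= _]mulr1 ler_wpM2l // exprn_ge0 // ltW.
Unshelve. all: end_near. Qed.

Lemma FTC0y (f F g : R -> R) (l : R) :
  (forall x, 0 <= x -> 0 <= f x) -> continuous f ->
  F x @[x --> +oo] --> l ->
  (forall x : R, is_derive x (1:R) F (g x)) -> (forall x : R, 0 < x -> g x = f x) ->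
  (\int[mu]_(x in `[0%R, +oo[) (f x)%:E = (l - F 0)%:E)%E.
Proof.
move=> f0 cf Fl dF gf; rewrite EFinB; apply: ge0_continuous_FTC2y => //.
- exact: continuous_subspaceT.
- apply: cvg_at_right_filter.
  apply/differentiable_continuous/derivable1_diffP.
  by have dF0 := dF 0; exact: ex_derive.
- move=> x; rewrite in_itv /= andbT => x0.
  by rewrite derive1E (@derive_val _ _ _ x 1 F (g x) (dF x)) gf.
Qed.

Let E := fun y : R => expR (- (eps * y)).
Lemma dlin x : is_derive x (1:R) (fun y : R => - (eps * y)) (- eps).
Proof.
have h := (is_deriveN (is_deriveZ eps (is_derive_id x (1:R)))).
rewrite (_ : (fun y : R => - (eps * y)) = - (eps \*: id)); last by apply/funext => y.
apply: is_derive_eq h _.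
by rewrite /GRing.scale /= mulr1.
Qed.
Lemma dE x : is_derive x (1:R) E (- eps * E x).
Proof.
have h := is_derive1_comp (is_derive_expR _) (dlin x).
rewrite (_ : E = expR \o (fun y : R => - (eps * y))) //.
apply: is_derive_eq h _.
by rewrite mulrC.
Qed.

Lemma dquad (a b c : R) x :
  is_derive x (1:R) (fun y : R => a * y ^+ 2 + b * y + c) (2 * a * x + b).
Proof.
have h1 := is_deriveZ a (is_deriveX 2 (is_derive_id x (1:R))).
have h2 := is_deriveZ b (is_derive_id x (1:R)).
have h3 := is_deriveD (is_deriveD h1 h2) (is_derive_cst c x (1:R)).
rewrite (_ : (fun y : R => a * y ^+ 2 + b * y + c) = a \*: (id ^+ 2) + b \*: id + cst c); last first.
  by apply/funext => y.
apply: is_derive_eq h3 _.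
rewrite /GRing.scale /= addr0 mulr1 expr1; ring.
Qed.

Lemma dquadE (a b c : R) x :
  is_derive x (1:R) (fun y : R => (a * y ^+ 2 + b * y + c) * E y)
    ((2 * a * x + b - eps * (a * x ^+ 2 + b * x + c)) * E x).
Proof.
have h := is_deriveM (dquad a b c x) (dE x).
rewrite (_ : (fun y : R => (a * y ^+ 2 + b * y + c) * E y) = (fun y : R => a * y ^+ 2 + b * y + c) * E); last first.
  by apply/funext => y.
apply: is_derive_eq h _.
rewrite /GRing.scale /=; ring.
Qed.

Lemma cvg_quadE (a b c : R) :
  (fun y : R => (a * y ^+ 2 + b * y + c) * E y) @ +oo --> (0:R).
Proof.
have h2 := cvg_polyexp 2.
have h1 := cvg_polyexp 1.
have h0 := cvg_polyexp 0.
have := cvgD (cvgD (cvgZ (cvg_cst a) h2) (cvgZ (cvg_cst b) h1)) (cvgZ (cvg_cst c) h0).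
rewrite !scaler0 !addr0 => H.
have {}H := H proper_pinfty_nbhs proper_pinfty_nbhs proper_pinfty_nbhs proper_pinfty_nbhs proper_pinfty_nbhs proper_pinfty_nbhs proper_pinfty_nbhs proper_pinfty_nbhs.
apply: (cvg_trans _ H); apply: near_eq_cvg; near=> y.
rewrite /E !fctE /= expr1 expr0; rewrite /GRing.scale /=; ring.
Unshelve. all: end_near. Qed.

Lemma integral_quadE (a b c : R) (f : R -> R) :
  (forall x, 0 <= x -> 0 <= f x) -> continuous f ->
  (forall x, 0 < x -> (2 * a * x + b - eps * (a * x ^+ 2 + b * x + c)) * E x = f x) ->
  (\int[mu]_(x in `[0%R, +oo[) (f x)%:E = (- c)%:E)%E.
Proof.
move=> f0 cf hf.
rewrite (FTC0y _ _ _ _ f0 cf (cvg_quadE a b c) (fun x => dquadE a b c x) hf).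
rewrite /E; congr EFin; rewrite (mulr0 eps) oppr0 expR0; ring.
Qed.

Lemma laplace_moment :
  (\int[mu]_v (v ^+ 2 * laplace_pdf eps v)%:E = (2 / eps ^+ 2)%:E)%E.
Proof.
have cf : continuous (fun v : R => v ^+ 2 * laplace_pdf eps v).
  move=> x; apply: cvgM; last exact: continuous_laplace.
  rewrite (_ : (fun v : R => v ^+ 2) = (fun v => v * v)); last by apply/funext => v; rewrite expr2.
  by apply: cvgM; exact: cvg_id.
have f0 : forall v : R, 0 <= v ^+ 2 * laplace_pdf eps v.
  by move=> v; rewrite mulr_ge0 ?sqr_ge0 ?laplace_ge0.
rewrite ge0_symfun_integralT //; last first.
  by move=> v; rewrite /= /laplace_pdf normrN sqrrN.
rewrite -set_itvcy.
rewrite (@integral_quadE (- 2^-1) (- eps^-1) (- eps^-2)) //.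
- by rewrite opprK -EFinM; congr EFin; rewrite exprVn; field; rewrite gt_eqF.
- move=> x x0; rewrite /E /laplace_pdf gtr0_norm //.
  have e0 : eps != 0 by rewrite gt_eqF.
  by field.
Qed.
End Calc.

Section P1.
Context {R : realType}.
Notation mu := (@lebesgue_measure R).
Variable eps : R.
Hypothesis heps : 0 < eps.
Variable g : probability R R.
Hypothesis priv : additive_noise_lipschitz_private eps g.

Let T2 := measurableTypeR R.
Let A : set (R * T2) := [set p | 0 <= p.2 /\ p.2 <= `|p.1|].
Let mA : measurable A.
Proof.
have -> : A = (snd @^-1` [set x : R | 0 <= x]) `&` ((fun p : R * T2 => `|p.1| - p.2) @^-1` [set x : R | 0 <= x]).
  by apply/seteqP; split => p /=; rewrite subr_ge0.
apply: measurableI.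
  rewrite -[X in measurable X]setTI; apply: measurable_snd => //.
  by rewrite -set_itvcy; exact: measurable_itv.
have m1 : measurable_fun setT (fun p : R * T2 => `|p.1|).
  exact: (measurableT_comp (@normr_measurable R setT) measurable_fst).
have m2 : measurable_fun setT (fun p : R * T2 => (p.2 : R)).
  exact: measurable_snd.
have := measurable_funB m1 m2.
move=> /(_ measurableT [set x : R | 0 <= x]); rewrite setTI; apply.
by rewrite -set_itvcy; exact: measurable_itv.
Qed.

Let h (p : R * T2) : \bar R := ((2 * p.2) * \1_A p)%:E.
Let mh : measurable_fun setT h.
Proof.
apply/measurable_EFinP; apply: measurable_funM; last exact: measurable_indic.
apply: measurable_funM; first exact: measurable_cst.
exact: measurable_snd.
Qed.
Let h0 p : (0 <= h p)%E.
Proof.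
rewrite /h lee_fin indicE; case: (boolP (p \in A)) => [|_]; last by rewrite mulr0.
by rewrite inE => -[p0 _]; rewrite mulr1 mulr_ge0.
Qed.

Lemma dsq (x : R) : is_derive x (1:R) (fun y : R => y ^+ 2) (2 * x).
Proof.
have h1 := is_deriveX 2 (is_derive_id x (1:R)).
rewrite (_ : (fun y : R => y ^+ 2) = id ^+ 2); last by apply/funext.
apply: is_derive_eq h1 _.
by rewrite /GRing.scale /= mulr1 expr1.
Qed.

Lemma integral_2y (c : R) : 0 <= c ->
  (\int[mu]_(y in `[0%R, c]) (2 * y)%:E = (c ^+ 2)%:E)%E.
Proof.
rewrite le_eqVlt => /predU1P[<-|c0].
  by rewrite set_itv1 integral_set1 expr2 mulr0.
have cF : continuous (fun y : R => y ^+ 2).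
  move=> y; rewrite (_ : (fun v : R => v ^+ 2) = (fun v => v * v)); last by apply/funext => v; rewrite expr2.
  by apply: cvgM; exact: cvg_id.
rewrite (@continuous_FTC2 _ (fun y => 2 * y) (fun y => y ^+ 2) 0 c c0).
- by rewrite expr0n /= sube0.
- apply: continuous_subspaceT => y.
  by apply: cvgM; [exact: cvg_cst | exact: cvg_id].
- split.
  + by move=> y _; have dy := dsq y; exact: ex_derive.
  + exact/cvg_at_right_filter/cF.
  + exact/cvg_at_left_filter/cF.
- by move=> y _; rewrite derive1E (@derive_val _ _ _ y 1 _ _ (dsq y)).
Qed.

Lemma inner1 (x : R) : (\int[mu]_y h (x, y) = (x ^+ 2)%:E)%E.
Proof.
rewrite -[x ^+ 2](real_normK (num_real x)) -integral_2y //.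
rewrite [RHS]integral_mkcond; apply: eq_integral => y _.
rewrite /h patchE indicE /=.
have AE : ((x, y) \in A) = (y \in `[0, `|x|]%classic).
  apply/idP/idP; rewrite in_setE /A /=.
    by move=> [y0 yx]; rewrite in_setE /= in_itv /= y0 yx.
  by rewrite in_itv /= => /andP[y0 yx]; rewrite in_setE /=.
rewrite AE; case: (y \in _); rewrite ?mulr1 ?mulr0 //.
Qed.

Let P (B : set R) : R := fine (g B).
Let gE B : measurable B -> g B = (P B)%:E.
Proof. by move=> mB; rewrite /P fineK // fin_num_measure. Qed.

Let mge (a : R) : measurable [set v : R | a <= v].
Proof. by rewrite -set_itvcy; exact: measurable_itv. Qed.
Let mle (a : R) : measurable [set v : R | v <= a].
Proof. by rewrite -set_itvNyc; exact: measurable_itv. Qed.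

Lemma tail_bound (y : R) : 0 < y ->
  expR (- (eps * y)) <= P [set v | y <= v] + P [set v | v <= - y].
Proof.
move=> y0.
have h1 := priv 0 (- y) _ (mge 0%R).
have h2 := priv 0 y _ (mle 0%R).
have E1 : [set v : R | [set v | 0 <= v] (0 + v)] = [set v | 0 <= v].
  by apply/seteqP; split => v /=; rewrite add0r.
have E2 : [set v : R | [set v | 0 <= v] (- y + v)] = [set v | y <= v].
  by apply/seteqP; split => v /=; rewrite addrC subr_ge0.
have E3 : [set v : R | [set v | v <= 0] (0 + v)] = [set v | v <= 0].
  by apply/seteqP; split => v /=; rewrite add0r.
have E4 : [set v : R | [set v | v <= 0] (y + v)] = [set v | v <= - y].
  by apply/seteqP; split => v /=; rewrite addrC -lerBrDr sub0r.
rewrite E1 E2 sub0r opprK in h1.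
rewrite E3 E4 sub0r normrN in h2.
rewrite !gE // -EFinM lee_fin gtr0_norm // in h1 h2.
have h3 : (1 <= P [set v | 0 <= v] + P [set v | v <= 0]).
  rewrite -lee_fin EFinD -!gE // -(probability_setT g).
  have -> : [set: R] = [set v | 0 <= v] `|` [set v | v <= 0].
    apply/seteqP; split => v // _; rewrite /=.
    by case: (lerP 0 v) => [|/ltW]; [left|right].
  exact: measureU2.
have K0 : 0 < expR (eps * y) by exact: expR_gt0.
rewrite expRN -(ler_pM2l K0) mulfV ?gt_eqF // mulrDr.
exact: (le_trans h3 (lerD h1 h2)).
Qed.

Lemma inner2 (y : R) : 0 < y ->
  ((2 * y * expR (- (eps * y)))%:E <= \int[g]_x h (x, y))%E.
Proof.
move=> y0.
pose B := [set v : R | y <= v] `|` [set v | v <= - y].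
have mB : measurable B by apply: measurableU.
have -> : (\int[g]_x h (x, y) = \int[g]_x ((2 * y)%:E * (\1_B x)%:E))%E.
  apply: eq_integral => x _; rewrite /h -EFinM !indicE.
  suff -> : ((x, y) \in A) = (x \in B) by [].
  apply/idP/idP; rewrite !in_setE /A /B /=.
    by move=> [_]; rewrite ler_normr lerNr => /orP[]; [left|right].
  by move=> H; split; [exact: ltW|rewrite ler_normr lerNr; case: H => ->; rewrite ?orbT].
rewrite ge0_integralZl_EFin //; last by rewrite mulr_ge0 // ltW.
rewrite integral_indic // setIT measureU //; last first.
  apply/seteqP; split => v // [/= h1 h2].
  have h3 := le_trans h1 h2; exfalso; lra.
- rewrite EFinM; apply: lee_wpmul2l; first by rewrite lee_fin mulr_ge0 // ltW.
  have := tail_bound _ y0; rewrite -lee_fin EFinD /P !fineK //; exact: fin_num_measure.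
by apply/measurable_EFinP; exact: measurable_indic.
Qed.

Lemma lower_bound : ((2 / eps ^+ 2)%:E <= \int[g]_v (v ^+ 2)%:E)%E.
Proof.
have -> : (\int[g]_v (v ^+ 2)%:E = \int[g]_x \int[mu]_y h (x, y))%E.
  by apply: eq_integral => x _; rewrite inner1.
rewrite (@fubini_tonelli _ _ R T2 R g mu h mh h0).
have mG := @measurable_fun_fubini_tonelli_G _ _ R T2 R g h mh h0.
have G0 : forall y : T2, (0 <= fubini_G g h y)%E.
  by move=> y; apply: integral_ge0 => x _; exact: h0.
have mD : measurable (`[0%R, +oo[%classic : set T2) by exact: measurable_itv.
apply: (@le_trans _ _ (\int[mu]_(y in `[0%R, +oo[) fubini_G g h y)%E); last first.
  by apply: ge0_subset_integral => //; exact: measurableT.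
have -> : (2 / eps ^+ 2)%:E = (\int[mu]_(y in `[0%R, +oo[) (2 * y * expR (- (eps * y)))%:E)%E.
  rewrite (@integral_quadE R eps heps 0 (- (2 / eps)) (- (2 / eps ^+ 2))) //.
  - by rewrite opprK.
  - by move=> x x0; rewrite mulr_ge0 ?expR_ge0 // mulr_ge0.
  - move=> x; apply: cvgM; last first.
      apply: continuous_comp; last exact: continuous_expR.
      by apply: cvgN; apply: cvgM; [exact: cvg_cst|exact: cvg_id].
    by apply: cvgM; [exact: cvg_cst|exact: cvg_id].
  - move=> x x0; rewrite /=.
    have e0 : eps != 0 by rewrite gt_eqF.
    by field.
apply: ge0_le_integral => //.
- by move=> y; rewrite /= in_itv /= andbT => y0; rewrite lee_fin mulr_ge0 ?expR_ge0 // mulr_ge0.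
- apply/measurable_EFinP; apply: measurable_funTS; apply: continuous_measurable_fun.
  move=> x; apply: cvgM; last first.
    apply: continuous_comp; last exact: continuous_expR.
    by apply: cvgN; apply: cvgM; [exact: cvg_cst|exact: cvg_id].
  by apply: cvgM; [exact: cvg_cst|exact: cvg_id].
- exact: measurable_funTS.
move=> y; rewrite /= in_itv /= andbT le_eqVlt => /predU1P[<-|y0].
  by rewrite mulr0 mul0r; exact: G0.
exact: inner2.
Qed.
End P1.

Theorem theorem1 (R : realType) (eps : R) (heps : 0 < eps) :
  (forall g : probability R R,
     additive_noise_lipschitz_private eps g ->
     ((2 / eps ^+ 2)%:E <= \int[g]_v (v ^+ 2)%:E)%E)
  /\ additive_noise_lipschitz_private eps (laplace_prob eps)
  /\ (\int[lebesgue_measure]_v (v ^+ 2 * laplace_pdf eps v)%:E = (2 / eps ^+ 2)%:E)%E.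
Proof.
split; first by move=> g priv; exact: lower_bound.
split; first exact: laplace_private.
exact: laplace_moment.
Qed.
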